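(* Let $X,Y$ be based spaces, $r\colon X\to Y$ and $l\colon Y\to X$ based maps, and $h\colon X\times[0,1]\to X$ a based homotopy from $\mathrm{id}_X$ to $l\circ r$. Then there are explicit mutually inverse homotopy equivalences $\chi\colon\mathrm{hofib}(r)\to\Omega\,\mathrm{hofib}(l)$ and $\chi^{-1}\colon\Omega\,\mathrm{hofib}(l)\to\mathrm{hofib}(r)$ (homotopy fibres over the basepoints).
   Context: Homotopy fibres use the path-space model: $\mathrm{hofib}(r)=\{(x,\gamma)\in X\times\mathrm{Map}([0,1],Y):\gamma(0)=r(x),\gamma(1)=*\}$, and $\Omega$ denotes based loops. *)

(* Defs.v *)
From HB Require Import structures.
From mathcomp Require Import all_boot all_order all_algebra.
From mathcomp Require Import all_classical all_reals all_analysis.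

Unset Printing Implicit Defensive.

Import Order.TTheory GRing.Theory Num.Theory.
Import numFieldNormedType.Exports.
Local Open Scope classical_set_scope.
Local Open Scope ring_scope.

Notation unit_interval R := (set_type (`[0%R, 1%R]%classic : set R)).

Lemma in01_0 (R : realType) : (0:R) \in (`[0%R, 1%R]%classic : set R).
Proof. by apply/mem_set; rewrite /= in_itv /= lexx ler01. Qed.

Lemma in01_1 (R : realType) : (1:R) \in (`[0%R, 1%R]%classic : set R).
Proof. by apply/mem_set; rewrite /= in_itv /= lexx ler01. Qed.

Definition i0 {R : realType} : unit_interval R := exist _ (0:R) (in01_0 R).
Definition i1 {R : realType} : unit_interval R := exist _ (1:R) (in01_1 R).

(* Path-space model of the homotopy fibre of r : X -> Y over y0:
   pairs (x, gamma) with gamma : [0,1] -> Y continuous, gamma 0 = r x,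
   gamma 1 = y0; topologised as a subspace of X x Map([0,1], Y), the
   mapping space carrying the compact-open topology. *)
Definition hofib_set (R : realType) {X Y : topologicalType} (r : X -> Y) (y0 : Y)
  : set (X * {compact-open, unit_interval R -> Y}) :=
  [set p : X * {compact-open, unit_interval R -> Y} | (continuous (p.2 : unit_interval R -> Y)) /\
     (p.2 : unit_interval R -> Y) i0 = r p.1 /\ (p.2 : unit_interval R -> Y) i1 = y0].

Definition hofib (R : realType) {X Y : topologicalType} (r : X -> Y) (y0 : Y) : Type :=
  set_type (hofib_set R r y0).

Lemma hofib_pt_subproof (R : realType) {X Y : topologicalType} (r : X -> Y)
  {x0 : X} {y0 : Y} (hr : r x0 = y0) :
  ((x0, (cst y0 : {compact-open, unit_interval R -> Y})) : X * _) \in hofib_set R r y0.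
Proof. apply/mem_set; split; first exact: cst_continuous. by split. Qed.

Definition hofib_pt (R : realType) {X Y : topologicalType} (r : X -> Y)
  {x0 : X} {y0 : Y} (hr : r x0 = y0) : hofib R r y0 :=
  exist _ (x0, cst y0) (hofib_pt_subproof R r hr).

Definition loop_set (R : realType) {F : topologicalType} (f0 : F)
  : set {compact-open, unit_interval R -> F} :=
  [set g : {compact-open, unit_interval R -> F} | (continuous (g : unit_interval R -> F)) /\
     (g : unit_interval R -> F) i0 = f0 /\ (g : unit_interval R -> F) i1 = f0].

Definition loops (R : realType) {F : topologicalType} (f0 : F) : Type :=
  set_type (loop_set R f0).

Definition homotopic (R : realType) {A B : topologicalType} (f g : A -> B) : Prop :=
  exists H : A * unit_interval R -> B,
    (continuous H) /\ (forall a, H (a, i0) = f a) /\ (forall a, H (a, i1) = g a).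

Definition homotopy_inverse (R : realType) {A B : topologicalType}
  (f : A -> B) (g : B -> A) : Prop :=
  (continuous f) /\ (continuous g) /\
  homotopic R (g \o f) idfun /\ homotopic R (f \o g) idfun.

(* Main.v *)
Require Import Defs.
From HB Require Import structures.
From mathcomp Require Import all_boot all_order all_algebra.
From mathcomp Require Import all_classical all_reals all_analysis.
Import numFieldNormedType.Exports.
From mathcomp Require Import ring lra.
Import Order.TTheory GRing.Theory Num.Theory.

Section Dev.
Local Open Scope classical_set_scope.
Local Open Scope ring_scope.
End Dev.

Local Open Scope classical_set_scope.
Local Open Scope ring_scope.

Section Interval.
Variable R : realType.
Local Notation I := (unit_interval R).

Definition clamp (x : R) : R := Num.min 1 (Num.max 0 x).

Lemma clamp_in (x : R) : clamp x \in (`[0%R, 1%R]%classic : set R).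
Proof.
apply/mem_set; rewrite /= in_itv /= /clamp.
rewrite le_min ler01 /= le_max lexx /= ge_min lexx /=.
by [].

Qed.

Definition toI (x : R) : I := exist _ (clamp x) (clamp_in x).

Lemma clamp_cont : continuous clamp.
Proof.
move=> x; rewrite /clamp.
apply: (@continuous_min R R (fun _ => 1) (fun y => Num.max 0 y)); first exact: cvg_cst.
apply: (@continuous_max R R (fun _ => 0) id); first exact: cvg_cst.
exact: cvg_id.
Qed.

Lemma val_cont : continuous (fun s : I => sval s).
Proof. exact: initial_continuous. Qed.

Lemma toI_cont : continuous toI.
Proof.
apply: continuous_comp_initial.
exact: clamp_cont.
Qed.

End Interval.
Arguments clamp {R}.
Arguments toI {R}.
Arguments val_cont {R}.

Local Open Scope classical_set_scope.
Local Open Scope ring_scope.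

Section Interval2.
Variable R : realType.
Local Notation I := (unit_interval R).

Lemma clamp_id (x : R) : 0 <= x <= 1 -> clamp x = x.
Proof.
move=> /andP[x0 x1]; rewrite /clamp.
have -> : Num.max 0 x = x by rewrite max_r.
by rewrite min_r.
Qed.

Lemma toI_val (s : I) : toI (sval s) = s.
Proof.
apply: val_inj => /=; apply: clamp_id.
by case: s => x /= /set_mem; rewrite /= in_itv.
Qed.

Lemma I_compact : compact [set: I].
Proof.
have -> : [set: I] = toI @` `[0%R, 1%R]%classic.
  apply/seteqP; split => // s _; exists (sval s); last exact: toI_val.
  by case: s => x /= /set_mem.
apply: continuous_compact; first exact/continuous_subspaceT/toI_cont.
exact: segment_compact.
Qed.

Lemma I_hausdorff : hausdorff_space I.
Proof.
rewrite open_hausdorff => p q pq.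
have vpq : sval p != sval q by apply: contra pq => /eqP h; apply/eqP/val_inj.
have := @order_hausdorff _ R; rewrite open_hausdorff => /(_ _ _ vpq).
case=> -[A B] /= [pA qB] [oA oB AB0].
exists (sval @^-1` A, sval @^-1` B) => /=.
  by split; rewrite inE; [move: pA|move: qB]; rewrite inE.
split.
- exact: (@open_comp _ _ _ _ (fun x _ => @val_cont R x)).
- exact: (@open_comp _ _ _ _ (fun x _ => @val_cont R x)).
apply/eqP; apply/seteqP; split => // x [/= Ax Bx].
by have := AB0 => /eqP; rewrite -subset0 => /(_ (sval x)); apply.
Qed.

Lemma I_lc : locally_compact [set: I].
Proof.
move=> x _; rewrite withinET; exists setT; first exact: filterT.
by split; [exact: I_compact | exact: closedT].
Qed.

End Interval2.

Local Open Scope classical_set_scope.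
Local Open Scope ring_scope.

Section Curry.
Variable R : realType.
Local Notation I := (unit_interval R).

Lemma uncurry_cont {Z W : topologicalType} (F : Z -> {compact-open, I -> W}) :
  continuous F -> (forall z, continuous (F z : I -> W)) ->
  continuous (fun p : Z * I => (F p.1 : I -> W) p.2).
Proof.
move=> cF cFz.
have := @continuous_uncurry Z I W F (@I_lc R) (@I_hausdorff R) cF cFz.
move=> h; rewrite /uncurry in h.
by have <- : (fun p : Z * I => let (x0, y) := p in F x0 y) = (fun p : Z * I => (F p.1 : I -> W) p.2) by apply: funext => -[].
Qed.

Lemma curry_cont {Z W : topologicalType} (f : Z * I -> W) :
  continuous f -> continuous (fun z => ((fun s => f (z, s)) : {compact-open, I -> W})).
Proof.
move=> cf.
exact: (@continuous_curry_fun Z I W f cf).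
Qed.

End Curry.

Local Open Scope classical_set_scope.
Local Open Scope ring_scope.

Section Generic.
Variable R : realType.
Local Notation I := (unit_interval R).

Lemma comp_cont {T U V : topologicalType} (f : T -> U) (g : U -> V) :
  continuous f -> continuous g -> continuous (fun t => g (f t)).
Proof. by move=> cf cg t; apply: continuous_comp; [exact: cf | exact: cg]. Qed.

Lemma pair_cont {T U V : topologicalType} (f : T -> U) (g : T -> V) :
  continuous f -> continuous g -> continuous (fun t => (f t, g t)).
Proof. by move=> cf cg t; apply: cvg_pair; [exact: cf | exact: cg]. Qed.

Lemma fst_cont {T U : topologicalType} : continuous (@fst T U).
Proof. by move=> t; exact: cvg_fst. Qed.

Lemma snd_cont {T U : topologicalType} : continuous (@snd T U).
Proof. by move=> t; exact: cvg_snd. Qed.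

Lemma cst_cont {T U : topologicalType} (u : U) : continuous (fun _ : T => u).
Proof. by move=> t; exact: cvg_cst. Qed.

Lemma into_sub {T U : topologicalType} (A : set U) (f : T -> set_type A) :
  continuous (fun t => sval (f t)) -> continuous f.
Proof. move=> h; exact: (@continuous_comp_initial _ _ _ set_val f h). Qed.

Lemma sval_cont {U : topologicalType} (A : set U) : continuous (fun x : set_type A => sval x).
Proof. exact: initial_continuous. Qed.

Lemma radd_cont {T : topologicalType} (f g : T -> R) :
  continuous f -> continuous g -> continuous (fun t => f t + g t).
Proof. by move=> cf cg t; apply: cvgD; [exact: cf | exact: cg]. Qed.

Lemma rmul_cont {T : topologicalType} (f g : T -> R) :
  continuous f -> continuous g -> continuous (fun t => f t * g t).
Proof. by move=> cf cg t; apply: cvgM; [exact: cf | exact: cg]. Qed.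

Lemma ropp_cont {T : topologicalType} (f : T -> R) :
  continuous f -> continuous (fun t => - f t).
Proof. by move=> cf t; apply: cvgN; exact: cf. Qed.

Lemma rmin_cont {T : topologicalType} (f g : T -> R) :
  continuous f -> continuous g -> continuous (fun t => Num.min (f t) (g t)).
Proof. by move=> cf cg t; exact: (@continuous_min R T f g t (cf t) (cg t)). Qed.

Lemma rmax_cont {T : topologicalType} (f g : T -> R) :
  continuous f -> continuous g -> continuous (fun t => Num.max (f t) (g t)).
Proof. by move=> cf cg t; exact: (@continuous_max R T f g t (cf t) (cg t)). Qed.

Lemma paste_cont {T W : topologicalType} (c : T -> R) (f g : T -> W) :
  continuous c -> continuous f -> continuous g ->
  (forall t, c t = 0 -> f t = g t) ->
  continuous (fun t => if c t <= 0 then f t else g t).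
Proof.
move=> cc cf cg fg.
set F := fun t => _.
apply/continuous_subspace_setT.
have -> : [set: T] = (c @^-1` [set x | x <= 0]) `|` (c @^-1` [set x | 0 <= x]).
  apply/seteqP; split => // t _ /=.
  by case: (lerP (c t) 0) => h; [left | right; exact: ltW].
apply: withinU_continuous.
- by apply: preimage_closed => //; exact: closed_le.
- by apply: preimage_closed => //; exact: closed_ge.
- apply: (@subspace_eq_continuous _ _ _ f); last exact: continuous_subspaceT.
  by move=> t /set_mem /= h; rewrite /from_subspace /F h.
- apply: (@subspace_eq_continuous _ (c @^-1` [set x | 0 <= x]) _ g); last exact: continuous_subspaceT.
  move=> t /set_mem /= h; rewrite /from_subspace /F; case: ifPn => // h2.
  by apply/esym/fg; apply/eqP; rewrite eq_le h2 h.
Qed.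

End Generic.
Arguments radd_cont {R T}.
Arguments rmul_cont {R T}.
Arguments ropp_cont {R T}.
Arguments rmin_cont {R T}.
Arguments rmax_cont {R T}.
Arguments paste_cont {R T W}.

Local Open Scope classical_set_scope.
Local Open Scope ring_scope.

Section Spaces.
Variable R : realType.
Local Notation I := (unit_interval R).

Lemma slice_cont {Z W : topologicalType} (g : Z * I -> W) z :
  continuous g -> continuous (fun s : I => g (z, s)).
Proof.
move=> cg; apply: (@comp_cont _ _ _ (fun s : I => (z, s))) => //.
by apply: pair_cont; [exact: cst_cont | move=> ?; exact: cvg_id].
Qed.

Section HofibIntro.
Context {X Y : topologicalType} (r : X -> Y) (y0 : Y).

Lemma mkHF_subproof (x : X) (g : I -> Y) : continuous g -> g i0 = r x -> g i1 = y0 ->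
  ((x, (g : {compact-open, I -> Y})) : X * _) \in hofib_set R r y0.
Proof. by move=> cg h0 h1; apply/mem_set; split. Qed.

Definition mkHF (x : X) (g : I -> Y) (cg : continuous g) (h0 : g i0 = r x) (h1 : g i1 = y0) :
  hofib R r y0 := exist _ (x, g : {compact-open, I -> Y}) (@mkHF_subproof x g cg h0 h1).

Lemma mkHF_cont {Z : topologicalType} (x : Z -> X) (g : Z * I -> Y)
  (cg : continuous g) (h0 : forall z, g (z, i0) = r (x z)) (h1 : forall z, g (z, i1) = y0) :
  continuous x ->
  continuous (fun z => mkHF (x z) (fun s => g (z, s)) (slice_cont g z cg) (h0 z) (h1 z)).
Proof.
move=> cx; apply: into_sub => /=.
apply: pair_cont => //.
exact: (@curry_cont R Z Y g cg).
Qed.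

Lemma HF_fst_cont {Z : topologicalType} (f : Z -> hofib R r y0) :
  continuous f -> continuous (fun z => (sval (f z)).1).
Proof.
move=> cf; apply: (@comp_cont _ _ _ (fun z => sval (f z))) => //; last exact: fst_cont.
by apply: (@comp_cont _ _ _ f) => //; exact: sval_cont.
Qed.

Lemma HF_snd_cont {Z : topologicalType} (f : Z -> hofib R r y0) :
  continuous f -> continuous (fun p : Z * I => ((sval (f p.1)).2 : I -> Y) p.2).
Proof.
move=> cf.
apply: (@uncurry_cont R Z Y (fun z => (sval (f z)).2)).
  apply: (@comp_cont _ _ _ (fun z => sval (f z))); last exact: snd_cont.
  by apply: (@comp_cont _ _ _ f) => //; exact: sval_cont.
move=> z; case: (f z) => -[x g] /= /set_mem [].
by [].
Qed.

Lemma HF_eq (p q : hofib R r y0) : (sval p).1 = (sval q).1 ->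
  (forall s, ((sval p).2 : I -> Y) s = ((sval q).2 : I -> Y) s) -> p = q.
Proof.
move: p q => [[x g] pp] [[x' g'] qq] /= hx hg.
apply: eq_sig_hprop => /=; first by move=> ? ? ?; exact: Prop_irrelevance.
have -> : g = g' by apply: funext.
by rewrite hx.
Qed.

End HofibIntro.

End Spaces.
Arguments mkHF {R X Y r y0}.
Arguments mkHF_cont {R X Y r y0 Z x g}.
Arguments HF_eq {R X Y r y0}.
Arguments HF_fst_cont {R X Y r y0 Z}.
Arguments HF_snd_cont {R X Y r y0 Z}.
Arguments slice_cont {R Z W}.

Local Open Scope classical_set_scope.
Local Open Scope ring_scope.

Section Loops.
Variable R : realType.
Local Notation I := (unit_interval R).
Context {X Y : topologicalType} (l : Y -> X) (x0 : X) (y0 : Y) (lb : l y0 = x0).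

Local Notation F := (hofib R l x0).
Local Notation B := (loops R (hofib_pt R l lb)).

Section fam.
Context {Z : topologicalType} (b : Z * I -> Y) (D : (Z * I) * I -> X)
  (cb : continuous b) (cD : continuous D)
  (hD0 : forall p, D (p, i0) = l (b p)) (hD1 : forall p, D (p, i1) = x0)
  (hb0 : forall z, b (z, i0) = y0) (hb1 : forall z, b (z, i1) = y0)
  (hL0 : forall z t, D ((z, i0), t) = x0) (hL1 : forall z t, D ((z, i1), t) = x0).

Definition Gfam (p : Z * I) : F := mkHF (b p) (fun t => D (p, t)) (slice_cont D p cD) (hD0 p) (hD1 p).

Lemma Gfam_cont : continuous Gfam.
Proof. exact: (mkHF_cont (x := b)). Qed.

Lemma mkB_subproof z : ((fun s => Gfam (z, s)) : {compact-open, I -> F}) \in loop_set R (hofib_pt R l lb).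
Proof.
apply/mem_set; split; first exact: slice_cont Gfam z Gfam_cont.
by split; apply: HF_eq => /=; try move=> s; rewrite ?hb0 ?hb1 ?hL0 ?hL1.
Qed.

Definition mkB (z : Z) : B := exist (fun g => g \in loop_set R (hofib_pt R l lb)) _ (mkB_subproof z).

Lemma mkB_cont : continuous mkB.
Proof.
apply: into_sub => /=.
exact: (@curry_cont R Z F Gfam Gfam_cont).
Qed.

End fam.

Lemma B_fst_cont {Z : topologicalType} (f : Z -> B) :
  continuous f -> continuous (fun p : Z * I => (sval ((sval (f p.1) : I -> F) p.2)).1).
Proof.
move=> cf.
apply: (@HF_fst_cont R _ _ l x0 _ (fun p : Z * I => (sval (f p.1) : I -> F) p.2)).
apply: (@uncurry_cont R Z F (fun z => sval (f z))).
  by apply: (@comp_cont _ _ _ f) => //; exact: sval_cont.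
by move=> z; case: (f z) => g /= /set_mem [].
Qed.

Lemma B_snd_cont {Z : topologicalType} (f : Z -> B) :
  continuous f -> continuous (fun q : (Z * I) * I =>
     ((sval ((sval (f q.1.1) : I -> F) q.1.2)).2 : I -> X) q.2).
Proof.
move=> cf.
apply: (@HF_snd_cont R _ _ l x0 _ (fun p : Z * I => (sval (f p.1) : I -> F) p.2)).
apply: (@uncurry_cont R Z F (fun z => sval (f z))).
  by apply: (@comp_cont _ _ _ f) => //; exact: sval_cont.
by move=> z; case: (f z) => g /= /set_mem [].
Qed.

Lemma B_eq (p q : B) :
  (forall s, (sval ((sval p : I -> F) s)).1 = (sval ((sval q : I -> F) s)).1) ->
  (forall s t, ((sval ((sval p : I -> F) s)).2 : I -> X) t = ((sval ((sval q : I -> F) s)).2 : I -> X) t) ->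
  p = q.
Proof.
move: p q => [g pp] [g' qq] /= h1 h2.
apply: eq_sig_hprop => /=; first by move=> ? ? ?; exact: Prop_irrelevance.
have : (g : I -> F) = g'.
  by apply: funext => s; apply: HF_eq; [exact: h1 | exact: h2].
by [].
Qed.

End Loops.

Local Open Scope classical_set_scope.
Local Open Scope ring_scope.

Section Helpers.
Variable R : realType.
Local Notation I := (unit_interval R).

Lemma toI_comp_cont {T : topologicalType} (f : T -> R) :
  continuous f -> continuous (fun t => toI (f t)).
Proof. by move=> cf; apply: (@comp_cont _ _ _ f toI) => //; exact: toI_cont. Qed.

Lemma Ival_cont {T : topologicalType} (f : T -> I) :
  continuous f -> continuous (fun t => sval (f t)).
Proof. by move=> cf; apply: (@comp_cont _ _ _ f) => //; exact: val_cont. Qed.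

Lemma id_cont {T : topologicalType} : continuous (fun t : T => t).
Proof. by move=> t; exact: cvg_id. Qed.

Lemma toI_id (x : R) : 0 <= x <= 1 -> sval (toI x) = x.
Proof. exact: clamp_id. Qed.

Lemma Ival_ge0 (s : I) : 0 <= sval s.
Proof. by case: s => x /= /set_mem; rewrite /= in_itv /= => /andP[]. Qed.

Lemma Ival_le1 (s : I) : sval s <= 1.
Proof. by case: s => x /= /set_mem; rewrite /= in_itv /= => /andP[]. Qed.

Lemma toI_le0 (x : R) : x <= 0 -> toI x = i0.
Proof.
move=> hx; apply: val_inj => /=; rewrite /clamp.
have -> : Num.max 0 x = 0 by rewrite max_l.
by rewrite min_r // ler01.
Qed.

Lemma toI_ge1 (x : R) : 1 <= x -> toI x = i1.
Proof.
move=> hx; apply: val_inj => /=; rewrite /clamp.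
by rewrite min_l // le_max hx orbT.
Qed.

Lemma toI_eq (x y : R) : x = y -> toI x = toI y.
Proof. by move=> ->. Qed.

Lemma toI_valE (x : R) (s : I) : x = sval s -> toI x = s.
Proof. by move=> ->; exact: toI_val. Qed.

Lemma i0E : sval (@i0 R) = 0. Proof. by []. Qed.
Lemma i1E : sval (@i1 R) = 1. Proof. by []. Qed.

End Helpers.
Arguments toI_comp_cont {R T}.
Arguments Ival_cont {R T}.
Arguments Ival_ge0 {R}.
Arguments Ival_le1 {R}.
Arguments toI_id {R}.
Arguments toI_le0 {R}.
Arguments toI_ge1 {R}.
Arguments toI_eq {R}.
Arguments toI_valE {R}.


Ltac cont1 := lazymatch goal with
  | |- continuous (fun _ => ?c) => exact: cst_cont
  | |- continuous (fun p => p.1) => exact: fst_cont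
  | |- continuous (fun p => p.2) => exact: snd_cont
  | |- continuous (fun p => p) => exact: id_cont
  | |- continuous (@fst _ _) => exact: fst_cont
  | |- continuous (@snd _ _) => exact: snd_cont
  | |- continuous (fun p => (@?a p, @?b p)) => apply: (pair_cont a b)
  | |- continuous (fun p => (@?a p) + (@?b p)) => apply: (radd_cont a b)
  | |- continuous (fun p => (@?a p) * (@?b p)) => apply: (rmul_cont a b)
  | |- continuous (fun p => - (@?a p)) => apply: (ropp_cont a)
  | |- continuous (fun p => Num.min (@?a p) (@?b p)) => apply: (rmin_cont a b)
  | |- continuous (fun p => Num.max (@?a p) (@?b p)) => apply: (rmax_cont a b)
  | |- continuous (fun p => toI (@?a p)) => apply: (toI_comp_cont a)
  | |- continuous (fun p => sval (@?a p)) => apply: (Ival_cont a)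
  | |- continuous (fun p => ?f (@?g p)) => apply: (comp_cont g f)
  | |- continuous _ => assumption
  end.
Ltac cont := repeat cont1.



Section Trans.
Variable R : realType.
Local Notation I := (unit_interval R).

Lemma homotopic_trans {A B : topologicalType} (f g k : A -> B) :
  homotopic R f g -> homotopic R g k -> homotopic R f k.
Proof.
move=> [H1 [c1 [a1 b1]]] [H2 [c2 [a2 b2]]].
exists (fun p => if sval p.2 - 2^-1 <= 0 then H1 (p.1, toI (2 * sval p.2))
                 else H2 (p.1, toI (2 * sval p.2 - 1))).
split.
  apply: paste_cont; try cont.
  move=> [a u] /= hu.
  rewrite (_ : toI _ = i1); last by apply: toI_ge1; lra.
  rewrite (_ : toI _ = i0); last by apply: toI_le0; lra.
  by rewrite b1 a2.
split => a /=.
- rewrite ifT; last by lra.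
  by rewrite (_ : toI _ = i0) ?a1 //; apply: toI_le0; lra.
- rewrite ifF; last by apply/negbTE; rewrite -ltNge; lra.
  by rewrite (_ : toI _ = i1) ?b2 //; apply: toI_ge1; lra.
Qed.

End Trans.

Local Open Scope classical_set_scope.
Local Open Scope ring_scope.

Section Main.
Variable R : realType.
Local Notation I := (unit_interval R).
Variables (X Y : topologicalType) (x0 : X) (y0 : Y) (r : X -> Y) (l : Y -> X).
Hypotheses (r_cts : continuous r) (l_cts : continuous l) (r_based : r x0 = y0) (l_based : l y0 = x0).
Variables (h : X * I -> X).
Hypotheses (h_cts : continuous h) (h_start : forall x, h (x, i0) = x)
  (h_end : forall x, h (x, i1) = l (r x)) (h_based : forall t, h (x0, t) = x0).

Section Phi.
Context {Z : topologicalType} (x : Z -> X) (rho : Z * I -> Y) (E : (Z * I) * I -> X).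
Hypotheses (x_cts : continuous x) (rho_cts : continuous rho) (E_cts : continuous E)
  (rho0 : forall z, rho (z, i0) = r (x z)) (rho1 : forall z, rho (z, i1) = y0)
  (Ebot : forall p, E (p, i0) = l (rho p)) (Etop : forall p, E (p, i1) = x0)
  (Eright : forall z t, E ((z, i1), t) = x0).

Definition wf (p : Z * I) : X :=
  if sval p.2 - 2^-1 <= 0 then h (x p.1, toI (2 * sval p.2))
  else E ((p.1, i0), toI (2 * sval p.2 - 1)).

Lemma wf_cts : continuous wf.
Proof.
apply: paste_cont; try cont.
move=> [z a] /= ha.
have -> : toI (2 * sval a) = i1 by apply: toI_ge1; lra.
have -> : toI (2 * sval a - 1) = i0 by apply: toI_le0; lra.
by rewrite h_end Ebot rho0.
Qed.

Lemma wf0 z : wf (z, i0) = x z.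
Proof.
rewrite /wf /= ifT; last by lra.
by rewrite (@toI_le0 R) ?h_start //; lra.
Qed.

Lemma wf1 z : wf (z, i1) = x0.
Proof.
rewrite /wf /= ifF; last by apply/negbTE; rewrite -ltNge; lra.
by rewrite (@toI_ge1 R) ?Etop //; lra.
Qed.


Definition betaf (p : Z * I) : Y :=
  if sval p.2 - 2^-1 <= 0 then r (wf (p.1, toI (1 - 2 * sval p.2)))
  else rho (p.1, toI (2 * sval p.2 - 1)).

Lemma betaf_cts : continuous betaf.
Proof.
apply: paste_cont; try cont; first exact: wf_cts.
move=> [z a] /= ha.
have -> : toI (1 - 2 * sval a) = i0 by apply: toI_le0; lra.
have -> : toI (2 * sval a - 1) = i0 by apply: toI_le0; lra.
by rewrite wf0 rho0.
Qed.

Lemma betaf0 z : betaf (z, i0) = y0.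
Proof.
rewrite /betaf /= ifT; last by lra.
by rewrite (@toI_ge1 R) ?wf1 //; lra.
Qed.

Lemma betaf1 z : betaf (z, i1) = y0.
Proof.
rewrite /betaf /= ifF; last by apply/negbTE; rewrite -ltNge; lra.
by rewrite (@toI_ge1 R) ?rho1 //; lra.
Qed.

Definition LP (q : (Z * I) * I) : X :=
  if sval q.1.2 + sval q.2 - 1 <= 0 then
    h (wf (q.1.1, toI (1 - sval q.1.2 - Num.min (sval q.1.2) (sval q.2))),
       toI (1 - 2 * sval q.2))
  else wf (q.1.1, toI (Num.max (3 / 2 * sval q.1.2 + sval q.2 / 2 - 1) (2 * sval q.2 - 1))).

Lemma LP_cts : continuous LP.
Proof.
apply: paste_cont; try cont; try exact: wf_cts.
move=> [[z a] t] /= ha.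
have a0 := Ival_ge0 a; have a1 := Ival_le1 a; have t0 := Ival_ge0 t; have t1 := Ival_le1 t.
case: (lerP (sval t) (2^-1)) => ht.
- have -> : Num.min (sval a) (sval t) = sval t by rewrite min_r //; lra.
  have -> : toI (1 - sval a - sval t) = i0 by apply: toI_le0; lra.
  rewrite wf0.
  have -> : Num.max (3 / 2 * sval a + sval t / 2 - 1) (2 * sval t - 1) = 2^-1 - sval t.
    rewrite max_l; lra.
  rewrite /wf /= clamp_id; last lra.
  rewrite ifT; last lra.
  by congr h; congr pair; apply: toI_eq; lra.
- have -> : Num.min (sval a) (sval t) = sval a by rewrite min_l //; lra.
  have -> : toI (1 - 2 * sval t) = i0 by apply: toI_le0; lra.
  rewrite h_start.
  have -> : Num.max (3 / 2 * sval a + sval t / 2 - 1) (2 * sval t - 1) = 2 * sval t - 1.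
    rewrite max_r; lra.
  by congr wf; congr pair; apply: toI_eq; lra.
Qed.

Definition Df (q : (Z * I) * I) : X :=
  if sval q.1.2 - 2^-1 <= 0 then LP ((q.1.1, toI (2 * sval q.1.2)), q.2)
  else E ((q.1.1, toI (2 * sval q.1.2 - 1)), q.2).

Lemma Df_cts : continuous Df.
Proof.
apply: paste_cont; try cont; try exact: LP_cts.
move=> [[z a] t] /= ha.
have t0 := Ival_ge0 t; have t1 := Ival_le1 t.
have -> : toI (2 * sval a) = i1 by apply: toI_ge1; lra.
have -> : toI (2 * sval a - 1) = i0 by apply: toI_le0; lra.
rewrite /LP /= ?i1E.
case: ifPn => ht.
- have -> : t = i0 by apply: val_inj => /=; lra.
  rewrite Ebot rho0 -h_end.
  have -> : toI (1 - 1 - Num.min 1 (sval (@i0 R))) = i0 by apply: toI_le0; rewrite ?i0E min_r ?ler01 //; lra.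
  rewrite wf0; congr h; congr pair; apply: toI_ge1; rewrite ?i0E; lra.
- have -> : Num.max (3 / 2 * 1 + sval t / 2 - 1) (2 * sval t - 1) = 2^-1 + sval t / 2.
    rewrite max_l; lra.
  rewrite /wf /= clamp_id; last lra.
  rewrite ifF; last by apply/negbTE; rewrite -ltNge; lra.
  by congr E; congr pair; apply: toI_valE; lra.
Qed.

Lemma Df_bot p : Df (p, i0) = l (betaf p).
Proof.
case: p => z a; have a0 := Ival_ge0 a; have a1 := Ival_le1 a.
rewrite /Df /betaf /=; case: ifPn => ha; last by rewrite Ebot.
rewrite /LP /= clamp_id; last lra.
rewrite ifT; last lra.
rewrite -h_end; congr h; congr pair; last by apply: toI_ge1; lra.
congr wf; congr pair; apply: toI_eq; rewrite min_r //; lra.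
Qed.

Lemma Df_top p : Df (p, i1) = x0.
Proof.
case: p => z a; have a0 := Ival_ge0 a; have a1 := Ival_le1 a.
rewrite /Df /=; case: ifPn => ha; last by rewrite Etop.
rewrite /LP /= clamp_id; last lra.
case: ifPn => hs.
- have -> : toI (1 - 2 * sval a - Num.min (2 * sval a) 1) = i1.
    by apply: toI_ge1; rewrite min_l; lra.
  by rewrite wf1 h_based.
- have -> : toI (Num.max (3 / 2 * (2 * sval a) + 1 / 2 - 1) (2 * 1 - 1)) = i1.
    by apply: toI_ge1; rewrite max_r; lra.
  by rewrite wf1.
Qed.

Lemma Df_left z t : Df ((z, i0), t) = x0.
Proof.
have t0 := Ival_ge0 t; have t1 := Ival_le1 t.
rewrite /Df /= ?i0E ifT; last lra.
rewrite /LP /= clamp_id; last lra.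
rewrite ifT; last lra.
have -> : toI (1 - 2 * 0 - Num.min (2 * 0) (sval t)) = i1.
  by apply: toI_ge1; rewrite min_l; lra.
by rewrite wf1 h_based.
Qed.

Lemma Df_right z t : Df ((z, i1), t) = x0.
Proof.
rewrite /Df /= ?i1E ifF; last by apply/negbTE; rewrite -ltNge; lra.
have -> : toI (2 * 1 - 1 : R) = i1 by apply: toI_ge1; lra.
by rewrite Eright.
Qed.

Definition Phi : Z -> loops R (hofib_pt R l l_based) :=
  @mkB R X Y l x0 y0 l_based Z betaf Df betaf_cts Df_cts Df_bot Df_top betaf0 betaf1 Df_left Df_right.

Lemma Phi_cts : continuous Phi.
Proof. exact: (@mkB_cont R X Y l x0 y0 l_based Z betaf Df betaf_cts Df_cts Df_bot Df_top betaf0 betaf1 Df_left Df_right). Qed.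

Lemma Phi_fst z s : (sval ((sval (Phi z) : I -> hofib R l x0) s)).1 = betaf (z, s).
Proof. by []. Qed.

Lemma Phi_snd z s t : ((sval ((sval (Phi z) : I -> hofib R l x0) s)).2 : I -> X) t = Df ((z, s), t).
Proof. by []. Qed.

End Phi.
Local Notation A := (hofib R r y0).
Local Notation F := (hofib R l x0).
Local Notation B := (loops R (hofib_pt R l l_based)).

Definition xA (a : A) : X := (sval a).1.
Definition gam (p : A * I) : Y := ((sval p.1).2 : I -> Y) p.2.

Lemma xA_cts : continuous xA.
Proof. exact: (@HF_fst_cont R X Y r y0 A id id_cont). Qed.

Lemma gam_cts : continuous gam.
Proof. exact: (@HF_snd_cont R X Y r y0 A id id_cont). Qed.

Lemma gam0 a : gam (a, i0) = r (xA a).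
Proof. by case: a => -[x g] pp; have [_ [h0 _]] := set_mem pp; exact: h0. Qed.

Lemma gam1 a : gam (a, i1) = y0.
Proof. by case: a => -[x g] pp; have [_ [_ h1]] := set_mem pp; exact: h1. Qed.

Definition bB (p : B * I) : Y := (sval ((sval p.1 : I -> F) p.2)).1.
Definition DB (q : (B * I) * I) : X := ((sval ((sval q.1.1 : I -> F) q.1.2)).2 : I -> X) q.2.

Lemma bB_cts : continuous bB.
Proof. exact: (@B_fst_cont R X Y l x0 y0 l_based B id id_cont). Qed.

Lemma DB_cts : continuous DB.
Proof. exact: (@B_snd_cont R X Y l x0 y0 l_based B id id_cont). Qed.

Lemma bB0 q : bB (q, i0) = y0.
Proof. by case: q => g pp; have [_ [hh _]] := set_mem pp; rewrite /bB /DB /= hh. Qed.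

Lemma bB1 q : bB (q, i1) = y0.
Proof. by case: q => g pp; have [_ [_ hh]] := set_mem pp; rewrite /bB /DB /= hh. Qed.

Lemma DB_left q t : DB ((q, i0), t) = x0.
Proof. by case: q => g pp; have [_ [hh _]] := set_mem pp; rewrite /bB /DB /= hh. Qed.

Lemma DB_right q t : DB ((q, i1), t) = x0.
Proof. by case: q => g pp; have [_ [_ hh]] := set_mem pp; rewrite /bB /DB /= hh. Qed.

Lemma DB_bot p : DB (p, i0) = l (bB p).
Proof. by case: p => q s; rewrite /DB /bB /=; case: ((sval q : I -> F) s) => -[y d] pp; have [_ [h0 _]] := set_mem pp; exact: h0. Qed.

Lemma DB_top p : DB (p, i1) = x0.
Proof. by case: p => q s; rewrite /DB /bB /=; case: ((sval q : I -> F) s) => -[y d] pp; have [_ [_ h1]] := set_mem pp; exact: h1. Qed.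

Definition Echi (q : (A * I) * I) : X := l (gam (q.1.1, toI (Num.min 1 (sval q.1.2 + sval q.2)))).

Lemma Echi_cts : continuous Echi.
Proof. rewrite /Echi; cont; exact: gam_cts. Qed.

Lemma Echi_bot p : Echi (p, i0) = l (gam p).
Proof.
case: p => a s; rewrite /Echi /=; congr (l (gam (a, _))).
apply: toI_valE; rewrite addr0 min_r //; exact: Ival_le1.
Qed.

Lemma Echi_top p : Echi (p, i1) = x0.
Proof.
case: p => a s; rewrite /Echi /= (@toI_ge1 R) ?gam1 //.
have hs := Ival_ge0 s; rewrite min_l; lra.
Qed.

Lemma Echi_right a t : Echi ((a, i1), t) = x0.
Proof.
rewrite /Echi /= (@toI_ge1 R) ?gam1 //.
have hs := Ival_ge0 t; rewrite min_l; lra.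
Qed.

Definition chi : A -> B :=
  Phi xA gam Echi xA_cts gam_cts Echi_cts gam0 gam1 Echi_bot Echi_top Echi_right.

Lemma chi_cts : continuous chi.
Proof. exact: Phi_cts. Qed.

Lemma bB0r q : bB (q, i0) = r x0.
Proof. by rewrite bB0 r_based. Qed.

Definition chi_inv (q : B) : A :=
  mkHF x0 (fun s => bB (q, s)) (slice_cont bB q bB_cts) (bB0r q) (bB1 q).

Lemma chi_inv_cts : continuous chi_inv.
Proof. exact: (@mkHF_cont R X Y r y0 B (fun _ => x0) bB bB_cts bB0r bB1 (cst_cont _)). Qed.

Definition wA (p : A * I) : X := wf xA Echi p.

Lemma wA_cts : continuous wA.
Proof.
rewrite /wA; apply: wf_cts.
all: first [exact: xA_cts | exact: gam_cts | exact: Echi_cts | exact: gam0 | exact: Echi_bot].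
Qed.

Definition tauf (q : (A * I) * I) : R :=
  - (1 - sval q.1.2) + sval q.2 * (1 + (1 - sval q.1.2)).

Definition HAx (p : A * I) : X := wA (p.1, toI (1 - sval p.2)).

Definition HAg (q : (A * I) * I) : Y :=
  if tauf q <= 0 then r (wA (q.1.1, toI (- tauf q))) else gam (q.1.1, toI (tauf q)).

Lemma HAx_cts : continuous HAx.
Proof. rewrite /HAx; cont; exact: wA_cts. Qed.

Lemma HAg_cts : continuous HAg.
Proof.
apply: paste_cont; rewrite /tauf; try cont; try exact: wA_cts; try exact: gam_cts.
move=> [[a u] s] /= hs.
have -> : toI (- (- (1 - sval u) + sval s * (1 + (1 - sval u)))) = i0 by apply: toI_le0; lra.
have -> : toI (- (1 - sval u) + sval s * (1 + (1 - sval u))) = i0 by apply: toI_le0; lra.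
by rewrite /wA wf0 gam0.
Qed.

Lemma HAg0 p : HAg (p, i0) = r (HAx p).
Proof.
case: p => a u; have u0 := Ival_ge0 u; have u1 := Ival_le1 u.
rewrite /HAg /HAx /tauf /= ifT; last lra.
by congr (r (wA (a, _))); apply: toI_eq; lra.
Qed.

Lemma HAg1 p : HAg (p, i1) = y0.
Proof.
case: p => a u; have u0 := Ival_ge0 u; have u1 := Ival_le1 u.
rewrite /HAg /tauf /= ifF; last by apply/negbTE; rewrite -ltNge; lra.
rewrite (@toI_ge1 R) ?gam1 //; lra.
Qed.

Definition HA (p : A * I) : A :=
  mkHF (HAx p) (fun s => HAg (p, s)) (slice_cont HAg p HAg_cts) (HAg0 p) (HAg1 p).

Lemma HA_cts : continuous HA.
Proof. rewrite /HA; apply: mkHF_cont; exact: HAx_cts. Qed.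

Lemma homA : homotopic R (chi_inv \o chi) idfun.
Proof.
exists HA; split; first exact: HA_cts.
split => a.
- apply: HF_eq => /=.
  + rewrite /HAx /= (_ : toI (1 - 0) = i1); last by apply: toI_ge1; lra.
    rewrite /wA; apply: wf1; exact: Echi_top.
  + move=> s; have s0 := Ival_ge0 s; have s1 := Ival_le1 s.
    rewrite /HAg /tauf /bB /chi Phi_fst /betaf /=.
    case: ifPn => h1; case: ifPn => h2.
    * by congr (r (wA (a, _))); apply: toI_eq; lra.
    * exfalso; move: h1 h2; rewrite -ltNge; lra.
    * exfalso; move: h1 h2; rewrite -ltNge; lra.
    * by congr (gam (a, _)); apply: toI_eq; lra.
- apply: HF_eq => /=.
  + rewrite /HAx /= (_ : toI (1 - 1) = i0); last by apply: toI_le0; lra.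
    by rewrite /wA wf0.
  + move=> s; have s0 := Ival_ge0 s; have s1 := Ival_le1 s.
    rewrite /HAg /tauf /=; case: ifPn => h1.
    * have se : s = i0 by apply: val_inj => /=; lra.
      rewrite (_ : toI _ = i0); last by apply: toI_le0; lra.
      rewrite se.
      by rewrite /wA wf0 -gam0.
    * by rewrite /gam; congr (_ _); apply: toI_valE; lra.
Qed.

Lemma wf_ext {Z Z' : topologicalType} (x : Z -> X) (E : (Z * I) * I -> X)
  (x' : Z' -> X) (E' : (Z' * I) * I -> X) z z' :
  x z = x' z' -> (forall t, E ((z, i0), t) = E' ((z', i0), t)) ->
  forall a, wf x E (z, a) = wf x' E' (z', a).
Proof. by move=> hx hE a; rewrite /wf /= hx hE. Qed.

Lemma betaf_ext {Z Z' : topologicalType} (x : Z -> X) rho (E : (Z * I) * I -> X)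
  (x' : Z' -> X) rho' (E' : (Z' * I) * I -> X) z z' :
  x z = x' z' -> (forall s, rho (z, s) = rho' (z', s)) ->
  (forall s t, E ((z, s), t) = E' ((z', s), t)) ->
  forall s, betaf x rho E (z, s) = betaf x' rho' E' (z', s).
Proof.
move=> hx hr hE s; rewrite /betaf /= hr (@wf_ext _ _ x E x' E' z z') //.
Qed.

Lemma Df_ext {Z Z' : topologicalType} (x : Z -> X) (E : (Z * I) * I -> X)
  (x' : Z' -> X) (E' : (Z' * I) * I -> X) z z' :
  x z = x' z' -> (forall s t, E ((z, s), t) = E' ((z', s), t)) ->
  forall s t, Df x E ((z, s), t) = Df x' E' ((z', s), t).
Proof.
have we := @wf_ext _ _ x E x' E' z z'.
move=> hx hE s t; rewrite /Df /LP /= hE.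
by rewrite !(we hx (fun t => hE i0 t)).
Qed.

Definition x1 (p : B * I) : X := x0.
Definition rho1 (p : (B * I) * I) : Y := bB (p.1.1, p.2).
Definition E1 (q : ((B * I) * I) * I) : X :=
  DB ((q.1.1.1, toI (Num.min 1 (sval q.1.2 + sval q.2 * Num.min 1 (2 - 2 * sval q.1.1.2)))),
      toI (sval q.2 * Num.min 1 (2 * sval q.1.1.2))).

Lemma x1_cts : continuous x1. Proof. exact: cst_cont. Qed.
Lemma rho1_cts : continuous rho1. Proof. rewrite /rho1; have := bB_cts => ?; cont. Qed.
Lemma E1_cts : continuous E1. Proof. rewrite /E1; have := DB_cts => ?; cont. Qed.

Lemma rho1_0 z : rho1 (z, i0) = r (x1 z). Proof. by rewrite /rho1 /x1 /= bB0r. Qed.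
Lemma rho1_1 z : rho1 (z, i1) = y0. Proof. by rewrite /rho1 /= bB1. Qed.

Lemma E1_bot p : E1 (p, i0) = l (rho1 p).
Proof.
case: p => -[q u] s; rewrite /E1 /rho1 /= -DB_bot; have s1 := Ival_le1 s.
rewrite (_ : toI (0 * _) = i0); last by apply: toI_le0; lra.
by congr (DB ((q, _), _)); apply: toI_valE; rewrite mul0r addr0 min_r.
Qed.

Lemma E1_top p : E1 (p, i1) = x0.
Proof.
case: p => -[q u] s; rewrite /E1 /=; have s0 := Ival_ge0 s; have u0 := Ival_ge0 u; have u1 := Ival_le1 u.
case: (lerP (2^-1) (sval u)) => hu.
- rewrite (_ : toI (1 * _) = i1) ?DB_top //; apply: toI_ge1; rewrite min_l; lra.
- rewrite (_ : toI (Num.min 1 _) = i1) ?DB_right //; apply: toI_ge1.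
  rewrite (@min_l _ _ 1 (2 - 2 * sval u)); last lra.
  rewrite min_l; lra.
Qed.

Lemma E1_right z t : E1 ((z, i1), t) = x0.
Proof.
case: z => q u; rewrite /E1 /=; have t0 := Ival_ge0 t; have u0 := Ival_ge0 u; have u1 := Ival_le1 u.
rewrite (_ : toI (Num.min 1 _) = i1) ?DB_right //; apply: toI_ge1.
have m0 : 0 <= Num.min 1 (2 - 2 * sval u) by rewrite le_min ler01 /=; lra.
rewrite min_l //; have := mulr_ge0 t0 m0; lra.
Qed.

Definition H1 : B * I -> B :=
  Phi x1 rho1 E1 x1_cts rho1_cts E1_cts rho1_0 rho1_1 E1_bot E1_top E1_right.

Lemma H1_cts : continuous H1. Proof. exact: Phi_cts. Qed.

Lemma H1_fst z s : (sval ((sval (H1 z) : I -> F) s)).1 = betaf x1 rho1 E1 (z, s).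
Proof. by []. Qed.
Lemma H1_snd z s t : ((sval ((sval (H1 z) : I -> F) s)).2 : I -> X) t = Df x1 E1 ((z, s), t).
Proof. by []. Qed.
Lemma chi_fst z s : (sval ((sval (chi z) : I -> F) s)).1 = betaf xA gam Echi (z, s).
Proof. by []. Qed.
Lemma chi_snd z s t : ((sval ((sval (chi z) : I -> F) s)).2 : I -> X) t = Df xA Echi ((z, s), t).
Proof. by []. Qed.

Lemma H1_i0 q : H1 (q, i0) = chi (chi_inv q).
Proof.
apply: B_eq => [s|s t]; rewrite ?H1_fst ?chi_fst ?H1_snd ?chi_snd.
- apply: betaf_ext => //; move=> s' t'.
  + rewrite /E1 /Echi /gam /= -DB_bot.
    have -> : Num.min 1 (2 - 2 * 0) = (1 : R) by rewrite min_l //; lra.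
    have -> : Num.min 1 (2 * 0) = (0 : R) by rewrite min_r //; lra.
    rewrite mulr1 mulr0 (_ : toI 0 = i0) //; apply: toI_le0; lra.
- apply: Df_ext => // s' t'.
  rewrite /E1 /Echi /gam /= -DB_bot.
  have -> : Num.min 1 (2 - 2 * 0) = (1 : R) by rewrite min_l //; lra.
  have -> : Num.min 1 (2 * 0) = (0 : R) by rewrite min_r //; lra.
  rewrite mulr1 mulr0 (_ : toI 0 = i0) //; apply: toI_le0; lra.
Qed.

Definition th (p : (B * I) * I) : R :=
  Num.max 0 ((2 - sval p.1.2) * sval p.2 - (1 - sval p.1.2)).
Definition b2 (p : (B * I) * I) : Y := bB (p.1.1, toI (th p)).
Definition D2 (q : ((B * I) * I) * I) : X := DB ((q.1.1.1, toI (th q.1)), q.2).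

Lemma b2_cts : continuous b2. Proof. rewrite /b2 /th; have := bB_cts => ?; cont. Qed.
Lemma D2_cts : continuous D2. Proof. rewrite /D2 /th; have := DB_cts => ?; cont. Qed.

Lemma th0 z : toI (th (z, i0)) = i0.
Proof. case: z => q u; have u1 := Ival_le1 u; apply: toI_le0; rewrite /th /= max_l; lra. Qed.

Lemma th1 z : toI (th (z, i1)) = i1.
Proof. case: z => q u; have u1 := Ival_le1 u; apply: toI_ge1; rewrite /th /= max_r; lra. Qed.

Lemma D2_bot p : D2 (p, i0) = l (b2 p). Proof. by rewrite /D2 /b2 /= DB_bot. Qed.
Lemma D2_top p : D2 (p, i1) = x0. Proof. by rewrite /D2 /= DB_top. Qed.
Lemma b2_0 z : b2 (z, i0) = y0. Proof. by rewrite /b2 th0 bB0. Qed.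
Lemma b2_1 z : b2 (z, i1) = y0. Proof. by rewrite /b2 th1 bB1. Qed.
Lemma D2_left z t : D2 ((z, i0), t) = x0. Proof. by rewrite /D2 /= th0 DB_left. Qed.
Lemma D2_right z t : D2 ((z, i1), t) = x0. Proof. by rewrite /D2 /= th1 DB_right. Qed.

Definition H2 : B * I -> B :=
  @mkB R X Y l x0 y0 l_based (B * I)%type b2 D2 b2_cts D2_cts D2_bot D2_top b2_0 b2_1 D2_left D2_right.

Lemma H2_cts : continuous H2.
Proof. exact: (@mkB_cont R X Y l x0 y0 l_based (B * I)%type b2 D2 b2_cts D2_cts D2_bot D2_top b2_0 b2_1 D2_left D2_right). Qed.

Lemma H2_i1 q : H2 (q, i1) = q.
Proof.
apply: B_eq => [s|s t] /=; rewrite /b2 /D2 /th /=;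
  have s0 := Ival_ge0 s;
  (have -> : toI (Num.max 0 ((2 - 1) * sval s - (1 - 1))) = s by apply: toI_valE; rewrite max_r; lra);
  by [].
Qed.

Lemma wf_H1 q a : wf x1 E1 ((q, i1), a) = x0.
Proof.
rewrite /wf /=; case: ifPn => _; first by rewrite /x1 h_based.
rewrite /E1 /= (_ : toI (Num.min 1 _) = i0) ?DB_left //.
apply: toI_le0; rewrite min_r; last first.
  rewrite (@min_r _ _ 1 (2 - 2 * 1)); last lra.
  have := Ival_le1 (toI (2 * sval a - 1)); lra.
rewrite (@min_r _ _ 1 (2 - 2 * 1)); last lra.
have := Ival_ge0 (toI (2 * sval a - 1)); lra.
Qed.

Lemma H2_fst z s : (sval ((sval (H2 z) : I -> F) s)).1 = b2 (z, s).
Proof. by []. Qed.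
Lemma H2_snd z s t : ((sval ((sval (H2 z) : I -> F) s)).2 : I -> X) t = D2 ((z, s), t).
Proof. by []. Qed.

Lemma H1_i1 q : H1 (q, i1) = H2 (q, i0).
Proof.
apply: B_eq => [s|s t]; rewrite ?H1_fst ?H1_snd ?H2_fst ?H2_snd; have s0 := Ival_ge0 s; have s1 := Ival_le1 s.
- rewrite /betaf /b2 /th; cbn [fst snd]; rewrite ?i0E; case: ifPn => hs.
  + rewrite wf_H1 r_based (_ : toI (Num.max 0 _) = i0) ?bB0 //.
    by apply: toI_le0; rewrite max_l; lra.
  + rewrite /rho1; cbn [fst snd]; congr (bB (q, _)); apply: toI_eq; rewrite max_r; first lra.
    by move: hs; rewrite -ltNge; lra.
- rewrite /Df /D2 /th; cbn [fst snd]; rewrite ?i0E; case: ifPn => hs.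
  + rewrite (_ : toI (Num.max 0 _) = i0) ?DB_left; last by apply: toI_le0; rewrite max_l; lra.
    by rewrite /LP; cbn [fst snd]; case: ifPn => _; rewrite wf_H1 ?h_based.
  + have hs' : 2^-1 < sval s by move: hs; rewrite -ltNge; lra.
    rewrite /E1; cbn [fst snd]; rewrite ?i1E.
    have -> : Num.min 1 (2 - 2 * 1) = (0 : R) by rewrite min_r; lra.
    have -> : Num.min 1 (2 * 1) = (1 : R) by rewrite min_l; lra.
    rewrite mulr0 addr0 mulr1 toI_val toI_id; last lra.
    congr (DB ((q, _), t)); apply: toI_eq; rewrite max_r ?min_r; lra.
Qed.

Lemma homB : homotopic R (chi \o chi_inv) idfun.
Proof.
apply: (@homotopic_trans R _ _ _ (fun q => H1 (q, i1))).
- exists H1; split; first exact: H1_cts.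
  by split => q //=; rewrite H1_i0.
- exists H2; split; first exact: H2_cts.
  by split => q /=; rewrite ?H1_i1 ?H2_i1.
Qed.

Theorem main_result :
  exists (chi0 : A -> B) (chi_inv0 : B -> A), homotopy_inverse R chi0 chi_inv0.
Proof.
exists chi, chi_inv; split; first exact: chi_cts.
split; first exact: chi_inv_cts.
split; [exact: homA | exact: homB].
Qed.

End Main.


Local Close Scope ring_scope.
Local Close Scope classical_set_scope.

Theorem mainTheorem13 (R : realType) (X Y : topologicalType) (x0 : X) (y0 : Y)
  (r : X -> Y) (l : Y -> X)
  (r_cts : continuous r) (l_cts : continuous l)
  (r_based : r x0 = y0) (l_based : l y0 = x0)
  (h : X * unit_interval R -> X) (h_cts : continuous h)
  (h_start : forall x, h (x, i0) = x)
  (h_end : forall x, h (x, i1) = l (r x))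
  (h_based : forall t, h (x0, t) = x0) :
  exists (chi : hofib R r y0 -> loops R (hofib_pt R l l_based))
         (chi_inv : loops R (hofib_pt R l l_based) -> hofib R r y0),
    homotopy_inverse R chi chi_inv.
Proof.
by apply: main_result.
Qed.
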